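(* Let $c\in C_{\mathrm{SAGE}}(A)$ and suppose the index set $N=\{i\in[m]: c_i<0\}$ is nonempty. Then there exist vectors $c^{(i)}\in C_{\mathrm{AGE}}(A,i)$, $i\in N$, such that $c=\sum_{i\in N}c^{(i)}$ and $c^{(i)}_j=0$ for all distinct $i,j\in N$.
   Context: Let $A\in\mathbb{R}^{n\times m}$ have distinct columns $a_1,\dots,a_m$. For $c\in\mathbb{R}^m$, $\mathrm{Sig}(A,c)$ denotes the function $x\mapsto\sum_{i=1}^m c_i\exp(a_i^\top x)$ on $\mathbb{R}^n$. $C_{\mathrm{NNS}}(A)=\{c\in\mathbb{R}^m:\mathrm{Sig}(A,c)(x)\ge 0\ \forall x\in\mathbb{R}^n\}$. For $k\in[m]$, the $k$-th AGE cone is $C_{\mathrm{AGE}}(A,k)=\{c\in C_{\mathrm{NNS}}(A): c_i\ge 0\ \forall i\ne k\}$, and the SAGE cone is the Minkowski sum $C_{\mathrm{SAGE}}(A)=\sum_{k=1}^m C_{\mathrm{AGE}}(A,k)$. *)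

(* Defs.v *)
From Stdlib Require Import Reals Arith.
Open Scope R_scope.

(* Vectors in R^n are represented as functions nat -> R; only indices < n matter.
   The matrix A in R^{n x m} is given by its columns a : nat -> (nat -> R),
   column i (for i < m) being a i. *)

Fixpoint fsum (m : nat) (f : nat -> R) : R :=
  match m with
  | O => 0
  | S k => fsum k f + f k
  end.

Definition fsum_if (m : nat) (P : nat -> Prop) (dec : forall i, {P i} + {~ P i})
  (f : nat -> R) : R :=
  fsum m (fun i => if dec i then f i else 0).

Definition dot (n : nat) (u x : nat -> R) : R := fsum n (fun k => u k * x k).

Definition distinct_cols (m : nat) (a : nat -> nat -> R) (n : nat) : Prop :=
  forall i j, (i < m)%nat -> (j < m)%nat -> i <> j ->
    exists k, (k < n)%nat /\ a i k <> a j k.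

Definition Sig (n m : nat) (a : nat -> nat -> R) (c : nat -> R) (x : nat -> R) : R :=
  fsum m (fun i => c i * exp (dot n (a i) x)).

Definition C_NNS (n m : nat) (a : nat -> nat -> R) (c : nat -> R) : Prop :=
  forall x : nat -> R, 0 <= Sig n m a c x.

Definition C_AGE (n m : nat) (a : nat -> nat -> R) (k : nat) (c : nat -> R) : Prop :=
  C_NNS n m a c /\ (forall i, (i < m)%nat -> i <> k -> 0 <= c i).

(* Minkowski sum of the m AGE cones (vectors compared on indices < m) *)
Definition C_SAGE (n m : nat) (a : nat -> nat -> R) (c : nat -> R) : Prop :=
  exists d : nat -> (nat -> R),
    (forall k, (k < m)%nat -> C_AGE n m a k (d k)) /\
    (forall j, (j < m)%nat -> c j = fsum m (fun k => d k j)).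

Definition negIdx (m : nat) (c : nat -> R) (i : nat) : Prop := (i < m)%nat /\ c i < 0.

Definition negIdx_dec (m : nat) (c : nat -> R) (i : nat) : {negIdx m c i} + {~ negIdx m c i}.
Proof.
  unfold negIdx.
  destruct (Compare_dec.lt_dec i m) as [H|H]; [|right; tauto].
  destruct (Rlt_dec (c i) 0) as [H'|H']; [left; tauto | right; tauto].
Defined.

(* Main.v *)
Require Import Defs.
From Stdlib Require Import Reals Lra Lia Arith.
Open Scope R_scope.

Lemma fsum_ext m f g : (forall i, (i < m)%nat -> f i = g i) -> fsum m f = fsum m g.
Proof.
  induction m; intros H; simpl; auto.
  rewrite IHm by (intros; apply H; lia). rewrite H by lia. reflexivity.
Qed.

Lemma fsum_plus m f g : fsum m (fun i => f i + g i) = fsum m f + fsum m g.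
Proof. induction m; simpl; [ring|rewrite IHm; ring]. Qed.

Lemma fsum_scal m t f : fsum m (fun i => t * f i) = t * fsum m f.
Proof. induction m; simpl; [ring|rewrite IHm; ring]. Qed.

Lemma fsum_zero m : fsum m (fun _ => 0) = 0.
Proof. induction m; simpl; [ring|rewrite IHm; ring]. Qed.

Lemma fsum_nonneg m f : (forall i, (i < m)%nat -> 0 <= f i) -> 0 <= fsum m f.
Proof.
  induction m; intros H; simpl; [lra|].
  assert (0 <= fsum m f) by (apply IHm; intros; apply H; lia).
  assert (0 <= f m) by (apply H; lia). lra.
Qed.

Lemma fsum_split m f k : (k < m)%nat ->
  fsum m f = fsum m (fun l => if Nat.eq_dec l k then 0 else f l) + f k.
Proof.
  induction m; intros Hk; [lia|]. simpl.
  destruct (Nat.eq_dec m k) as [->|Hne].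
  - rewrite (fsum_ext k (fun l => if Nat.eq_dec l k then 0 else f l) f).
    + ring.
    + intros i Hi. destruct (Nat.eq_dec i k); [lia|auto].
  - rewrite (IHm ltac:(lia)). ring.
Qed.

Lemma fsum_ind m i : (i < m)%nat -> fsum m (fun l => if Nat.eq_dec l i then 1 else 0) = 1.
Proof.
  intros Hi. rewrite (fsum_split _ _ i Hi).
  rewrite (fsum_ext _ _ (fun _ => 0)).
  - rewrite fsum_zero. destruct (Nat.eq_dec i i); [ring|congruence].
  - intros l _. destruct (Nat.eq_dec l i); auto.
Qed.

Lemma fsum_ite m k a b h : (k < m)%nat ->
  fsum m (fun l => if Nat.eq_dec l k then a else b * h l)
  = a + b * fsum m (fun l => if Nat.eq_dec l k then 0 else h l).
Proof.
  intros Hk. rewrite (fsum_split _ _ k Hk).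
  destruct (Nat.eq_dec k k); [|congruence].
  rewrite <- fsum_scal.
  rewrite (fsum_ext _ _ (fun l => b * (if Nat.eq_dec l k then 0 else h l))).
  - ring.
  - intros l _. destruct (Nat.eq_dec l k); [ring|]. destruct (Nat.eq_dec l k); [congruence|ring].
Qed.

Lemma Sig_lin n m a f g t x :
  Sig n m a (fun i => f i + t * g i) x = Sig n m a f x + t * Sig n m a g x.
Proof.
  unfold Sig. rewrite <- fsum_scal, <- fsum_plus.
  apply fsum_ext. intros; ring.
Qed.

Definition Inv (n m : nat) (a : nat -> nat -> R) (c : nat -> R) (p : nat) (e : nat -> nat -> R) : Prop :=
  (forall l, (l < m)%nat -> C_AGE n m a l (e l)) /\
  (forall j, (j < m)%nat -> c j = fsum m (fun l => e l j)) /\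
  (forall k, (k < p)%nat -> 0 <= c k -> forall j, e k j = 0) /\
  (forall k, (k < p)%nat -> c k < 0 -> forall l, (l < m)%nat -> l <> k -> e l k = 0).

Lemma step n m a c e k lam (Hk : (k < m)%nat) (HI : Inv n m a c k e)
  (Hsum : fsum m lam = 0)
  (Hlam : forall l, (l < m)%nat -> l <> k -> 0 <= lam l)
  (Hkk : 0 <= 1 + lam k)
  (Hcond : forall l, (l < m)%nat -> l <> k -> 0 <= e l k + lam l * e k k)
  (Hold : forall k', (k' < k)%nat -> 0 <= c k' -> lam k' = 0)
  (Hnew3 : 0 <= c k -> forall j, e k j + lam k * e k j = 0)
  (Hnew4 : c k < 0 -> forall l, (l < m)%nat -> l <> k -> e l k + lam l * e k k = 0) :
  Inv n m a c (S k) (fun l j => e l j + lam l * e k j).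
Proof.
  destruct HI as [I1 [I2 [I3 I4]]].
  split; [|split; [|split]].
  - intros l Hl. split.
    + intros x. rewrite Sig_lin.
      destruct (I1 l Hl) as [N1 _]. destruct (I1 k Hk) as [N2 _].
      specialize (N1 x). specialize (N2 x).
      destruct (Nat.eq_dec l k) as [->|Hne].
      * nra.
      * specialize (Hlam l Hl Hne). nra.
    + intros j Hj Hjl.
      destruct (Nat.eq_dec l k) as [->|Hne].
      * destruct (I1 k Hk) as [_ S2]. specialize (S2 j Hj Hjl). nra.
      * destruct (Nat.eq_dec j k) as [->|Hjk].
        -- apply Hcond; auto.
        -- destruct (I1 l Hl) as [_ S1]. destruct (I1 k Hk) as [_ S2].
           specialize (S1 j Hj Hjl). specialize (S2 j Hj Hjk).
           specialize (Hlam l Hl Hne). nra.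
  - intros j Hj. rewrite fsum_plus.
    rewrite (fsum_ext _ (fun l => lam l * e k j) (fun l => e k j * lam l)) by (intros; ring).
    rewrite fsum_scal, Hsum. rewrite <- I2 by auto. ring.
  - intros k' Hk' Hc j.
    destruct (Nat.eq_dec k' k) as [->|Hne].
    + apply Hnew3; auto.
    + rewrite I3 by (auto; lia). rewrite Hold by (auto; lia). ring.
  - intros k' Hk' Hc l Hl Hlk.
    destruct (Nat.eq_dec k' k) as [->|Hne].
    + apply Hnew4; auto.
    + rewrite I4 by (auto; lia). rewrite (I4 k' ltac:(lia) Hc k Hk) by auto. ring.
Qed.

Lemma inv_exists n m a c (Hc : C_SAGE n m a c) (HN : exists i, negIdx m c i) :
  forall p, (p <= m)%nat -> exists e, Inv n m a c p e.
Proof.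
  destruct HN as [i0 [Hi0m Hi0c]].
  induction p as [|k IH]; intros Hp.
  - destruct Hc as [d [Hd1 Hd2]]. exists d. split; [auto|split; [auto|split; intros; lia]].
  - destruct (IH ltac:(lia)) as [e HI].
    assert (Hk : (k < m)%nat) by lia.
    pose proof HI as [I1 [I2 [I3 I4]]].
    set (T := fsum m (fun l => if Nat.eq_dec l k then 0 else e l k)).
    assert (HT : 0 <= T).
    { apply fsum_nonneg. intros l Hl. destruct (Nat.eq_dec l k); [lra|].
      destruct (I1 l Hl) as [_ S]. apply S; auto. }
    assert (Hck : c k = T + e k k).
    { rewrite I2 by auto. rewrite (fsum_split _ _ k Hk). reflexivity. }
    assert (Hnn : forall l, (l < m)%nat -> l <> k -> 0 <= e l k).
    { intros l Hl Hne. destruct (I1 l Hl) as [_ S]. apply S; auto. }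
    destruct (Rlt_dec (c k) 0) as [Hneg|Hpos].
    +
      set (D := - e k k).
      assert (HD : T < D) by (unfold D; lra).
      assert (HD0 : 0 < D) by lra.
      exists (fun l j => e l j + (fun l => if Nat.eq_dec l k then - T * / D else / D * e l k) l * e k j).
      apply step; auto.
      * rewrite fsum_ite by auto. fold T. field. lra.
      * intros l Hl Hne. destruct (Nat.eq_dec l k); [congruence|].
        apply Rmult_le_pos; [apply Rlt_le, Rinv_0_lt_compat; lra|auto].
      * destruct (Nat.eq_dec k k); [|congruence].
        replace (1 + - T * / D) with ((D - T) * / D) by (field; lra).
        apply Rmult_le_pos; [lra|apply Rlt_le, Rinv_0_lt_compat; lra].
      * intros l Hl Hne. destruct (Nat.eq_dec l k); [congruence|].
        replace (e k k) with (- D) by (unfold D; ring).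
        replace (e l k + / D * e l k * - D) with 0 by (field; lra). lra.
      * intros k' Hk' Hc'. destruct (Nat.eq_dec k' k); [lia|]. rewrite (I3 k' Hk' Hc' k). ring.
      * intros Hc'. lra.
      * intros _ l Hl Hne. destruct (Nat.eq_dec l k); [congruence|].
        replace (e k k) with (- D) by (unfold D; ring). field. lra.
    + assert (Hck0 : 0 <= c k) by lra.
      assert (Hki0 : k <> i0) by (intro; subst; lra).
      destruct (Rlt_dec 0 T) as [HTp|HTz].
      * exists (fun l j => e l j + (fun l => if Nat.eq_dec l k then -1 else / T * e l k) l * e k j).
        apply step; auto.
        -- rewrite fsum_ite by auto. fold T. field. lra.
        -- intros l Hl Hne. destruct (Nat.eq_dec l k); [congruence|].
           apply Rmult_le_pos; [apply Rlt_le, Rinv_0_lt_compat; lra|auto].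
        -- destruct (Nat.eq_dec k k); [lra|congruence].
        -- intros l Hl Hne. destruct (Nat.eq_dec l k); [congruence|].
           replace (e l k + / T * e l k * e k k) with (e l k * (c k * / T))
             by (rewrite Hck; field; lra).
           apply Rmult_le_pos; auto. apply Rmult_le_pos; auto.
           apply Rlt_le, Rinv_0_lt_compat; lra.
        -- intros k' Hk' Hc'. destruct (Nat.eq_dec k' k); [lia|].
           rewrite (I3 k' Hk' Hc' k). ring.
        -- intros _ j. destruct (Nat.eq_dec k k); [ring|congruence].
        -- intros; lra.
      * assert (HT0 : T = 0) by lra.
        exists (fun l j => e l j + (fun l => (if Nat.eq_dec l i0 then 1 else 0) - (if Nat.eq_dec l k then 1 else 0)) l * e k j).
        apply step; auto.
        -- unfold Rminus. rewrite fsum_plus.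
           rewrite (fsum_ext _ (fun l => - (if Nat.eq_dec l k then 1 else 0))
                     (fun l => -1 * (if Nat.eq_dec l k then 1 else 0))) by (intros; ring).
           rewrite fsum_scal, !fsum_ind by auto. ring.
        -- intros l Hl Hne. destruct (Nat.eq_dec l k); [congruence|].
           destruct (Nat.eq_dec l i0); lra.
        -- destruct (Nat.eq_dec k k); [|congruence]. destruct (Nat.eq_dec k i0); lra.
        -- intros l Hl Hne. destruct (Nat.eq_dec l k); [congruence|].
           specialize (Hnn l Hl Hne).
           destruct (Nat.eq_dec l i0); lra.
        -- intros k' Hk' Hc'. destruct (Nat.eq_dec k' k); [lia|].
           destruct (Nat.eq_dec k' i0); [subst; lra|]. ring.
        -- intros _ j. destruct (Nat.eq_dec k k); [|congruence].
           destruct (Nat.eq_dec k i0); [congruence|]. ring.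
        -- intros; lra.
Qed.

Theorem mainTheorem2 (n m : nat) (a : nat -> nat -> R) (c : nat -> R)
  (Hdist : distinct_cols m a n)
  (Hc : C_SAGE n m a c)
  (HN : exists i, negIdx m c i) :
  exists d : nat -> (nat -> R),
    (forall i, negIdx m c i -> C_AGE n m a i (d i)) /\
    (forall j, (j < m)%nat -> c j = fsum_if m (negIdx m c) (negIdx_dec m c) (fun i => d i j)) /\
    (forall i j, negIdx m c i -> negIdx m c j -> i <> j -> d i j = 0).
Proof.
  destruct (inv_exists n m a c Hc HN m (le_n m)) as [e [I1 [I2 [I3 I4]]]].
  exists e. split; [|split].
  - intros i [Hi _]. auto.
  - intros j Hj. rewrite I2 by auto. unfold fsum_if. apply fsum_ext.
    intros l Hl. destruct (negIdx_dec m c l) as [Hn|Hn]; auto.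
    apply I3; auto. unfold negIdx in Hn.
    destruct (Rlt_dec (c l) 0); [tauto|lra].
  - intros i j [Hi Hci] [Hj Hcj] Hij. apply I4; auto.
Qed.
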